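(* Let $G=(V,E)$ be a finite graph with a biclique partition $B_1=L_1\times R_1,\dots,B_m=L_m\times R_m$ of its edges, and let $\mathbb{G}=\{h_1,\dots,h_m\}\subseteq\{0,1,\star\}^V$ where $h_i(v)=0$ for $v\in L_i$, $h_i(v)=1$ for $v\in R_i$, $h_i(v)=\star$ otherwise. Let $\overline{\mathbb{G}}\subseteq\{0,1\}^V$ be any disambiguation of $\mathbb{G}$. Then the number of distinct vectors $(\bar h(v))_{\bar h\in\overline{\mathbb{G}}}$, $v\in V$, is at least $\chi(G)$; consequently, if $d$ is the VC dimension of the dual class $\overline{\mathbb{G}}^\top$ (the class of functions $\bar h\mapsto\bar h(v)$ on $\overline{\mathbb{G}}$, one for each $v\in V$), then $\chi(G)\le\sum_{i=0}^{d}\binom{|\overline{\mathbb{G}}|}{i}$.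
   Context: A disambiguation of a partial class $\mathbb{H}\subseteq\{0,1,\star\}^V$ on finite $V$ is a total class $\overline{\mathbb{H}}\subseteq\{0,1\}^V$ such that for every $h\in\mathbb{H}$ there is $\bar h\in\overline{\mathbb{H}}$ with $\bar h(v)=h(v)$ for all $v\in h^{-1}(\{0,1\})$. A biclique partition of $G$ is a family of complete bipartite subgraphs $L_i\times R_i$ (edges $\{u,v\}$, $u\in L_i$, $v\in R_i$) whose edge sets partition $E$. $\chi(G)$ is the chromatic number. The VC dimension of a total class is the largest size of a set on which all $0/1$ patterns are realized. *)

(* Defs.v *)
From mathcomp Require Import all_boot.
Set Implicit Arguments. Unset Strict Implicit. Unset Printing Implicit Defensive.

(* A finite simple graph: vertex type V : finType, edge relation e : rel V
   assumed symmetric and irreflexive (hypotheses of the theorem). *)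

Definition colorable (V : finType) (e : rel V) (k : nat) : bool :=
  [exists f : {ffun V -> 'I_k}, [forall u, forall v, e u v ==> (f u != f v)]].

Lemma colorable_card (V : finType) (e : rel V) :
  irreflexive e -> exists k, colorable e k.
Proof.
move=> irr; exists #|V|; apply/existsP; exists [ffun v => enum_rank v].
apply/forallP => u; apply/forallP => v; apply/implyP => euv.
rewrite !ffunE; apply/negP => /eqP /enum_rank_inj Huv.
by rewrite Huv irr in euv.
Qed.

Definition chi (V : finType) (e : rel V) (irr : irreflexive e) : nat :=
  ex_minn (colorable_card irr).

Definition in_biclique (V : finType) (L R : {set V}) (u v : V) : bool :=
  ((u \in L) && (v \in R)) || ((v \in L) && (u \in R)).

Definition biclique_partition (V : finType) (e : rel V) (m : nat)
    (L R : 'I_m -> {set V}) : Prop :=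
  (forall i u v, u \in L i -> v \in R i -> e u v) /\
  (forall u v, e u v -> #|[set i | in_biclique (L i) (R i) u v]| = 1).

(* partial concept h_i : V -> {0,1,star}; None = star, Some false = 0,
   Some true = 1 *)
Definition hpart (V : finType) (L R : {set V}) (v : V) : option bool :=
  if v \in L then Some false else if v \in R then Some true else None.

Definition disambiguation (V : finType) (m : nat) (h : 'I_m -> V -> option bool)
    (Gbar : {set {ffun V -> bool}}) : Prop :=
  forall i, exists2 hb, hb \in Gbar & forall v b, h i v = Some b -> hb v = b.

(* the dual function of v, as a vector indexed by Gbar
   (extended by false outside Gbar) *)
Definition dual_vec (V : finType) (Gbar : {set {ffun V -> bool}}) (v : V)
    : {ffun {ffun V -> bool} -> bool} :=
  [ffun hb => (hb \in Gbar) && hb v].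

Definition num_dual_vecs (V : finType) (Gbar : {set {ffun V -> bool}}) : nat :=
  #|[set dual_vec Gbar v | v : V]|.

Definition dual_shatters (V : finType) (Gbar : {set {ffun V -> bool}})
    (S : {set {ffun V -> bool}}) : bool :=
  (S \subset Gbar) &&
  [forall p : {ffun {ffun V -> bool} -> bool},
     [exists v : V, [forall hb in S, hb v == p hb]]].

Definition dual_VCdim (V : finType) (Gbar : {set {ffun V -> bool}}) : nat :=
  \max_(S : {set {ffun V -> bool}} | dual_shatters Gbar S) #|S|.

(* Main.v *)
Require Import Defs.
From mathcomp Require Import all_boot.
From mathcomp Require Import zify.
Set Implicit Arguments. Unset Strict Implicit. Unset Printing Implicit Defensive.

Definition shb (T : finType) (F : {set {ffun T -> bool}}) (S : {set T}) : bool :=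
  [forall p : {ffun T -> bool}, [exists f in F, [forall x in S, f x == p x]]].

Lemma shb_mono (T : finType) (F G : {set {ffun T -> bool}}) S :
  F \subset G -> shb F S -> shb G S.
Proof.
move=> FG /forallP H; apply/forallP => p; have /existsP [f /andP [fF Hf]] := H p.
by apply/existsP; exists f; rewrite (subsetP FG).
Qed.

Lemma pajor (T : finType) (F : {set {ffun T -> bool}}) :
  #|F| <= #|[set S : {set T} | shb F S]|.
Proof.
have [n leFn] := ubnP #|F|; elim: n => // n IHn in F leFn *.
case: (leqP #|F| 1) => [F1|/card_gt1P [f [g [fF gF fg]]]].
  case: (posnP #|F|) => [-> //|/card_gt0P [f fF]].
  apply: (leq_trans F1); apply/card_gt0P; exists set0; rewrite inE.
  apply/forallP => p; apply/existsP; exists f; rewrite fF /=.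
  by apply/forallP => x; rewrite inE.
have [x fxgx] : exists x, f x != g x.
  apply/existsP; apply: contraR fg => /existsPn H; apply/eqP/ffunP => x.
  by apply/eqP; move: (H x); rewrite negbK.
pose P := [set h : {ffun T -> bool} | h x].
pose F1 := F :&: P; pose F0 := F :\: P.
have cF := cardsID P F.
have gxE : g x = ~~ f x by move: fxgx; case: (f x); case: (g x).
have F1gt : 0 < #|F1|.
  apply/card_gt0P; case Hf: (f x); [exists f | exists g]; by rewrite !inE ?gxE ?Hf ?fF ?gF.
have F0gt : 0 < #|F0|.
  apply/card_gt0P; case Hf: (f x); [exists g | exists f]; by rewrite !inE ?gxE ?Hf ?fF ?gF.
rewrite -/F1 -/F0 in cF.
have leFn' : #|F| <= n by [].
have IH0 : #|F0| <= #|[set S | shb F0 S]|.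
  apply: IHn; apply: leq_trans leFn'; rewrite -cF -{1}[#|F0|]add0n ltn_add2r //.
have IH1 : #|F1| <= #|[set S | shb F1 S]|.
  apply: IHn; apply: leq_trans leFn'; rewrite -cF -{1}[#|F1|]addn0 ltn_add2l //.
set A0 := [set S | shb F0 S]; set A1 := [set S | shb F1 S]; set A := [set S | shb F S].
have nx0 S : S \in A0 -> x \notin S.
  rewrite inE => /forallP /(_ [ffun _ => true]) /existsP [h /andP [hF /forallP Hh]].
  apply/negP => xS; move: (Hh x); rewrite xS ffunE /=.
  by move: hF; rewrite !inE => /andP [] /negbTE ->.
have nx1 S : S \in A1 -> x \notin S.
  rewrite inE => /forallP /(_ [ffun _ => false]) /existsP [h /andP [hF /forallP Hh]].
  apply/negP => xS; move: (Hh x); rewrite xS ffunE /=.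
  by move: hF; rewrite !inE => /andP [_ ->].
pose B := [set x |: S | S in A0 :&: A1].
have cB : #|B| = #|A0 :&: A1|.
  apply: card_in_imset => S1 S2; rewrite inE => /andP [/nx0 H1 _].
  rewrite inE => /andP [/nx0 H2 _] E.
  by rewrite -(setU1K H1) -(setU1K H2) E.
have dis : (A0 :|: A1) :&: B = set0.
  apply/setP => S; rewrite in_set0 in_setI in_setU; apply/negP.
  move=> /andP [/orP H /imsetP [S' _ E]]; subst S.
  by case: H => [/nx0|/nx1]; rewrite setU11.
have sub : (A0 :|: A1) :|: B \subset A.
  apply/subsetP => S; rewrite in_setU => /orP [|/imsetP [S' HS' ->]].
    rewrite in_setU => /orP [] H; rewrite /A0 /A1 /A !inE in H *.
    - by apply: shb_mono H; apply/subsetP => h; rewrite !inE => /andP [].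
    - by apply: shb_mono H; apply/subsetP => h; rewrite !inE => /andP [].
  move: HS'; rewrite !inE => /andP [/forallP H0 /forallP H1].
  apply/forallP => p; case Hp: (p x).
    have /existsP [h /andP [hF /forallP Hh]] := H1 p.
    apply/existsP; exists h; move: hF; rewrite !inE => /andP [-> hx] /=.
    apply/forallP => y; rewrite !inE; case: eqP => [->|_] /=.
      by rewrite hx Hp.
    exact: Hh.
  have /existsP [h /andP [hF /forallP Hh]] := H0 p.
  apply/existsP; exists h; move: hF; rewrite !inE => /andP [/negbTE hx ->] /=.
  apply/forallP => y; rewrite !inE; case: eqP => [->|_] /=.
    by rewrite hx Hp.
  exact: Hh.
rewrite -cF addnC (leq_trans (leq_add IH0 IH1)) //.
have cU : #|(A0 :|: A1) :|: B| = #|A0 :|: A1| + #|B|.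
  by rewrite -cardsUI dis cards0 addn0.
by rewrite -cardsUI -cB -cU subset_leq_card.
Qed.
Lemma count_small (U : finType) (G : {set U}) k :
  #|[set S : {set U} | (S \subset G) && (#|S| < k)]| <= \sum_(i < k) 'C(#|G|, i).
Proof.
elim: k => [|k IH].
  by rewrite big_ord0 leqn0 cards_eq0; apply/eqP/setP => S; rewrite !inE ltn0 andbF.
rewrite big_ord_recr /= -cards_draws.
apply: leq_trans (leq_add IH (leqnn _)).
apply: leq_trans (leq_card_setU _ _).
apply: subset_leq_card; apply/subsetP => S; rewrite !inE ltnS leq_eqVlt.
by case/andP => -> /orP [] ->; rewrite ?orbT.
Qed.

Lemma chi_le (V : finType) (e : rel V) (irr : irreflexive e) k :
  colorable e k -> chi irr <= k.
Proof. by rewrite /chi; case: ex_minnP => n _ H /H. Qed.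

Theorem mainTheorem8 (V : finType) (e : rel V)
    (sym : symmetric e) (irr : irreflexive e)
    (m : nat) (L R : 'I_m -> {set V})
    (hB : biclique_partition e L R)
    (Gbar : {set {ffun V -> bool}})
    (hD : disambiguation (fun i => hpart (L i) (R i)) Gbar) :
  chi irr <= num_dual_vecs Gbar /\
  chi irr <= \sum_(i < (dual_VCdim Gbar).+1) 'C(#|Gbar|, i).
Proof.
set DV := [set dual_vec Gbar v | v : V].
have dvE hb v : hb \in Gbar -> dual_vec Gbar v hb = hb v.
  by move=> hbG; rewrite /dual_vec ffunE hbG.
have proper u v : e u v -> dual_vec Gbar u != dual_vec Gbar v.
  move=> euv; have := (proj2 hB) u v euv => /eqP.
  case/cards1P => i Hi.
  have : i \in [set i | in_biclique (L i) (R i) u v] by rewrite Hi set11.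
  have disj w : w \in L i -> w \in R i -> False.
    by move=> wL wR; have := (proj1 hB) i w w wL wR; rewrite irr.
  have [hb hbG Hhb] := hD i.
  rewrite inE /in_biclique => /orP [] /andP [xL yR].
  - have hu : hb u = false by apply: Hhb; rewrite /hpart xL.
    have hv : hb v = true.
      apply: Hhb; rewrite /hpart yR; case: ifP => // yL; case: (disj v yL yR).
    apply/negP => /eqP /ffunP /(_ hb); rewrite !dvE // hu hv //.
  - have hu : hb v = false by apply: Hhb; rewrite /hpart xL.
    have hv : hb u = true.
      apply: Hhb; rewrite /hpart yR; case: ifP => // yL; case: (disj u yL yR).
    apply/negP => /eqP /ffunP /(_ hb); rewrite !dvE // hu hv //.
have part1 : chi irr <= #|DV|.
  apply: chi_le; apply/existsP.
  case: (pickP (fun _ : V => true)) => [v0 _ | V0].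
    have x0 : dual_vec Gbar v0 \in DV by apply: imset_f.
    exists [ffun v => enum_rank_in x0 (dual_vec Gbar v)].
    apply/forallP => u; apply/forallP => v; apply/implyP => euv; rewrite !ffunE.
    apply: contra (proper u v euv) => /eqP E.
    have := congr1 enum_val E; rewrite !enum_rankK_in ?imset_f // => ->.
    by [].
  have : 0 < #|{ffun V -> 'I_#|DV|}|.
    by rewrite card_ffun; have -> : #|V| = 0 by apply: eq_card0 => v; have := V0 v.
  case/card_gt0P => f _; exists f; apply/forallP => u; by have := V0 u.
split; first exact: part1.
apply: (leq_trans part1); apply: (leq_trans (pajor DV)).
apply: leq_trans (count_small Gbar (dual_VCdim Gbar).+1).
apply: subset_leq_card; apply/subsetP => S; rewrite !inE => Hsh.
have SG : S \subset Gbar.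
  apply/subsetP => hb hbS; apply/negPn/negP => nG.
  have /existsP [f /andP [/imsetP [v _ ->] /forallP H]] := forallP Hsh [ffun _ => true].
  by move: (H hb); rewrite hbS ffunE /dual_vec ffunE (negbTE nG).
rewrite SG ltnS /dual_VCdim.
apply: (@leq_bigmax_cond _ (dual_shatters Gbar) (fun S => #|S|) S); rewrite /dual_shatters SG /=.
apply/forallP => p.
have /existsP [f /andP [/imsetP [v _ ->] /forallP H]] := forallP Hsh p.
apply/existsP; exists v; apply/forallP => hb; apply/implyP => hbS.
by have := implyP (H hb) hbS; rewrite dvE // (subsetP SG).
Qed.
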